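(* Let $\mathcal{A}$ be the ring of adeles of $\mathbb{Q}$ with $\mathbb{Q}^*$ acting by multiplication through the diagonal embedding. If $a\in\mathcal{A}$ is not invertible, then $$\overline{\mathbb{Q}^*a}=\{b\in\mathcal{A}: \text{for every } p\in\mathcal{P}\cup\{\infty\},\ a_p=0\implies b_p=0\}.$$
   Context: $\mathcal{P}$ is the set of primes. $\mathcal{A}=\mathcal{A}_f\times\mathbb{R}$, where $\mathcal{A}_f=\{(a_p)\in\prod_{p\in\mathcal{P}}\mathbb{Q}_p: a_p\in\mathbb{Z}_p\text{ for almost all }p\}$ with the restricted product topology; $\mathcal{A}$ has the product topology and componentwise operations, $\mathbb{Q}$ embedded diagonally. For $a\in\mathcal{A}$ write $a=((a_p)_{p\in\mathcal{P}},a_\infty)$. An adele is invertible iff all $a_p\ne0$, $a_\infty\ne0$ and $a_p\in\mathbb{Z}_p^*$ for almost all $p$. *)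

(* Defs.v *)
From HB Require Import structures.
From mathcomp Require Import all_boot all_order all_algebra.
From mathcomp Require Import all_classical all_reals.
From mathcomp Require Import topology normedtype.
Set Implicit Arguments. Unset Strict Implicit. Unset Printing Implicit Defensive.
Import Order.TTheory GRing.Theory Num.Theory.
Import numFieldNormedType.Exports.
Local Open Scope ring_scope.
Local Open Scope classical_set_scope.

Definition primeT := {p : nat | prime p}.

Definition padic_val (p : nat) (q : rat) : int :=
  (logn p `|numq q|%N)%:Z - (logn p `|denq q|%N)%:Z.
Definition padic_abs (p : nat) (q : rat) : rat :=
  if q == 0 then 0 else (p%:Q) ^ (- padic_val p q).

(** A model of Q_p: a field with an embedding of Q and an absolute value
    extending |.|_p, complete, in which Q is dense.  This is the defining
    (universal) property of the completion Q_p of Q w.r.t. |.|_p; any two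
    such models are uniquely isometrically isomorphic. *)
Record padic_field (p : nat) := PadicField {
  pf_car : fieldType;
  pf_abs : pf_car -> rat;
  pf_emb : {rmorphism rat -> pf_car};
  pf_abs_ge0 : forall x, 0 <= pf_abs x;
  pf_abs_eq0 : forall x, pf_abs x = 0 <-> x = 0;
  pf_absM : forall x y, pf_abs (x * y) = pf_abs x * pf_abs y;
  pf_absD : forall x y, pf_abs (x + y) <= Num.max (pf_abs x) (pf_abs y);
  pf_abs_emb : forall q, pf_abs (pf_emb q) = padic_abs p q;
  pf_dense : forall (x : pf_car) (e : rat), 0 < e ->
     exists q : rat, pf_abs (x - pf_emb q) < e;
  pf_complete : forall u : nat -> pf_car,
     (forall e : rat, 0 < e -> exists N, forall m n, (N <= m)%N -> (N <= n)%N ->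
         pf_abs (u m - u n) < e) ->
     exists l, forall e : rat, 0 < e -> exists N, forall n, (N <= n)%N ->
         pf_abs (u n - l) < e
}.

Arguments pf_car {p}.
Arguments pf_abs {p}.
Arguments pf_emb {p}.

Definition padic_open (p : nat) (K : padic_field p) (U : set (pf_car K)) :=
  forall x, U x -> exists e : rat, 0 < e /\
    forall y, pf_abs K (y - x) < e -> U y.

Section Adeles.
Variables (Qp : forall P : primeT, padic_field (val P)) (R : realType).

Definition adele_t := ((forall P : primeT, pf_car (Qp P)) * R)%type.

Definition is_adele (a : adele_t) : Prop :=
  exists N : nat, forall P : primeT, (N <= val P)%N -> pf_abs (Qp P) (a.1 P) <= 1.

Definition adele_invertible (a : adele_t) : Prop :=
  exists b : adele_t, is_adele b /\
    (forall P, a.1 P * b.1 P = 1) /\ a.2 * b.2 = 1.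

Definition adele_qmul (q : rat) (a : adele_t) : adele_t :=
  (fun P => pf_emb (Qp P) q * a.1 P, ratr q * a.2).

Definition adele_basic (S : seq primeT) (Uinf : set R)
  (Up : forall P, set (pf_car (Qp P))) (c : adele_t) : Prop :=
  Uinf c.2 /\ forall P, if P \in S then Up P (c.1 P)
                        else pf_abs (Qp P) (c.1 P) <= 1.

Definition adele_open (U : set adele_t) : Prop :=
  forall b, is_adele b -> U b ->
    exists (S : seq primeT) (Uinf : set R) (Up : forall P, set (pf_car (Qp P))),
      open Uinf /\ (forall P, P \in S -> padic_open (Up P)) /\
      adele_basic S Uinf Up b /\
      (forall c, is_adele c -> adele_basic S Uinf Up c -> U c).

Definition adele_closure (X : set adele_t) (b : adele_t) : Prop :=
  is_adele b /\ forall U, adele_open U -> U b ->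
    exists c, is_adele c /\ X c /\ U c.

Definition Qstar_orbit (a : adele_t) : set adele_t :=
  fun c => exists q : rat, q != 0 /\ c = adele_qmul q a.

End Adeles.

(* Main.v *)
Require Import Defs.
From HB Require Import structures.
From mathcomp Require Import all_boot all_order all_algebra.
From mathcomp Require Import all_classical all_reals.
From mathcomp Require Import topology normedtype.
From mathcomp Require Import ring lra.
Import Order.TTheory GRing.Theory Num.Theory.
Import numFieldNormedType.Exports.
Local Open Scope ring_scope.
Local Open Scope classical_set_scope.


Set Implicit Arguments. Unset Strict Implicit. Unset Printing Implicit Defensive.

Section PA.
Variable Qp : forall P : primeT, padic_field (val P).
Variable P : primeT.
Local Notation p := (val P).
Local Notation pa := (padic_abs p).

Lemma pprime : prime p. Proof. exact: valP P. Qed.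
Lemma pgt1 : (1 < p)%N. Proof. exact: prime_gt1 pprime. Qed.
Lemma pQgt0 : 0 < p%:R :> rat. Proof. by rewrite ltr0n ltnW // pgt1. Qed.

Lemma pabsM x y : pa (x * y) = pa x * pa y.
Proof. by rewrite -!(pf_abs_emb (Qp P)) rmorphM pf_absM. Qed.
Lemma pabsD x y : pa (x + y) <= Num.max (pa x) (pa y).
Proof. by rewrite -!(pf_abs_emb (Qp P)) rmorphD pf_absD. Qed.
Lemma pabs_ge0 x : 0 <= pa x.
Proof. by rewrite -!(pf_abs_emb (Qp P)) pf_abs_ge0. Qed.
Lemma pabs_eq0 x : (pa x == 0) = (x == 0).
Proof.
have [->|x0] := eqVneq x 0; first by rewrite /padic_abs !eqxx.
rewrite /padic_abs.
by rewrite (negbTE x0) gt_eqF // exprz_gt0 //; exact: pQgt0.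
Qed.
Lemma pabs0 : pa 0 = 0. Proof. by rewrite /padic_abs eqxx. Qed.
Lemma pabs1 : pa 1 = 1.
Proof. by rewrite /padic_abs /padic_val oner_eq0 subrr expr0z. Qed.
Lemma pabsN x : pa (- x) = pa x.
Proof. by rewrite /padic_abs /padic_val oppr_eq0 numqN denqN abszN. Qed.
Lemma pabsB x y : pa (x - y) = pa (y - x).
Proof. by rewrite -pabsN opprB. Qed.
Lemma pabsX x n : pa (x ^+ n) = pa x ^+ n.
Proof. by elim: n => [|n IH]; rewrite ?expr0 ?pabs1 // !exprS pabsM IH. Qed.
Lemma pabsV x : pa (x^-1) = (pa x)^-1.
Proof.
have [->|x0] := eqVneq x 0; first by rewrite invr0 pabs0 ?invr0.
have : pa x * pa x^-1 = 1 by rewrite -pabsM divff // pabs1.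
have px : pa x != 0 by rewrite pabs_eq0.
by move=> h; apply: (mulfI px); rewrite h divff.
Qed.
Lemma pabs_nat n : pa n%:R <= 1.
Proof.
elim: n => [|n IH]; first by rewrite pabs0.
rewrite -addn1 natrD; apply: le_trans (pabsD _ _) _.
by rewrite ge_max IH pabs1 lexx.
Qed.
Lemma pabs_int z : pa z%:~R <= 1.
Proof. by case: z => n; rewrite ?NegzE ?mulrNz ?pabsN pabs_nat. Qed.
Lemma pabs_p : pa p%:R = p%:R^-1.
Proof.
rewrite /padic_abs /padic_val pnatr_eq0 gtn_eqF ?prime_gt0 ?pprime //=.
rewrite -[p%:R]/((p%:Z)%:~R) numq_int denq_int logn_prime ?pprime // eqxx.
by rewrite logn1 subr0 exprN1.
Qed.
Lemma pabs_q (q : nat) : prime q -> q != p -> pa q%:R = 1.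
Proof.
move=> qp qn; rewrite /padic_abs /padic_val pnatr_eq0 gtn_eqF ?prime_gt0 //=.
rewrite -[q%:R]/((q%:Z)%:~R) numq_int denq_int logn_prime // eq_sym (negbTE qn).
by rewrite logn1 subr0 expr0z.
Qed.
Lemma pabs_dvd (z : int) k : ((p ^ k)%N %| z)%Z -> pa z%:~R <= (p%:R^-1) ^+ k.
Proof.
case/dvdzP=> c ->; rewrite intrM pabsM -[X in _ <= X]mul1r.
apply: ler_pM; rewrite ?pabs_ge0 ?pabs_int //.
by rewrite -[X in pa X]/((p ^ k)%:R) natrX pabsX pabs_p.
Qed.
End PA.

Set Implicit Arguments. Unset Strict Implicit. Unset Printing Implicit Defensive.

Section NT.
Variable Qp : forall P : primeT, padic_field (val P).
Local Notation pa X := (padic_abs (val X)).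

Lemma pabs_unit (P : primeT) (z : int) : ~~ (val P %| `|z|)%N -> pa P z%:~R = 1.
Proof.
move=> nd; have z0 : z != 0 by apply: contraNneq nd => ->.
rewrite /padic_abs /padic_val intr_eq0 (negbTE z0) numq_int denq_int logn1.
by rewrite logn_coprime ?subr0 ?expr0z // prime_coprime ?pprime.
Qed.

Lemma pint_den (P : primeT) s : pa P s <= 1 -> ~~ (val P %| `|denq s|)%N.
Proof.
move=> hs; apply/negP => pd.
have pn : ~~ (val P %| `|numq s|)%N.
  apply/negP => pn; have := coprime_num_den s; rewrite /coprime => /eqP g.
  have : (val P %| gcdn `|numq s| `|denq s|)%N by rewrite dvdn_gcd pn pd.
  by rewrite g dvdn1 => /eqP p1; move: (pgt1 P); rewrite p1.
have den0 : (denq s)%:~R != 0 :> rat by rewrite intr_eq0 denq_neq0.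
have hd : pa P (denq s)%:~R <= (val P)%:R^-1 ^+ 1.
  by apply: pabs_dvd => //; rewrite dvdzE absz_nat expn1.
have dpos : 0 < pa P (denq s)%:~R by rewrite lt_def pabs_eq0 den0 pabs_ge0.
move: hs; rewrite -(divq_num_den s) pabsM // pabsV // pabs_unit // mul1r.
rewrite leNgt invf_gt1 // (le_lt_trans hd) // expr1 invf_lt1 ?pQgt0 //.
by rewrite ltr1n pgt1.
Qed.

Lemma papprox (P : primeT) s n : pa P s <= 1 ->
  exists r : int, pa P (r%:~R - s) <= (val P)%:R^-1 ^+ n.
Proof.
move=> hs; have := pint_den hs => nd.
have cp : coprimez (denq s) ((val P ^ n)%N).
  rewrite coprimezE absz_nat coprime_sym; apply: coprimeXl.
  by rewrite prime_coprime ?pprime.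
case/coprimezP: cp => [[u v]] /= huv.
exists (numq s * u).
have den0 : (denq s)%:~R != 0 :> rat by rewrite intr_eq0 denq_neq0.
have -> : (numq s * u)%:~R - s =
   ((- numq s * v * (val P ^ n)%N)%:~R) * ((denq s)%:~R)^-1 :> rat.
  have h : (u%:~R * (denq s)%:~R + v%:~R * ((val P ^ n)%N)%:~R = 1 :> rat).
    by rewrite -!intrM -intrD huv.
  rewrite -{2}(divq_num_den s) !intrM intrN.
  apply: (mulIf den0); rewrite mulrBl divfK // mulrAC divfK //.
  set N := (numq s)%:~R in h *; set U := u%:~R in h *; set V := v%:~R in h *.
  set Dd := (denq s)%:~R in h den0 *; set Pn := ((val P ^ n)%N)%:~R in h *.
  apply/eqP; rewrite -subr_eq0; apply/eqP.
  transitivity (N * (U * Dd + V * Pn - 1)); first ring.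
  by rewrite h subrr mulr0.
rewrite pabsM // pabsV // (@pabs_unit P (denq s) nd) invr1 mulr1.
by apply: pabs_dvd => //; apply: dvdz_mull; exact: dvdzz.
Qed.

Definition pp (L : seq primeT) n := (\prod_(Q <- L) (val Q ^ n))%N.

Lemma pp_gt0 L n : (0 < pp L n)%N.
Proof.
elim: L => [|Q L IH]; rewrite /pp ?big_nil ?big_cons //.
by rewrite muln_gt0 IH expn_gt0 prime_gt0 ?pprime.
Qed.

Lemma pp_dvd L n Q : Q \in L -> (val Q ^ n %| pp L n)%N.
Proof.
elim: L => [|R L IH] //; rewrite /pp big_cons in_cons => /orP[/eqP->|h].
  exact: dvdn_mulr.
by apply: dvdn_mull; exact: IH.
Qed.

Lemma pp_coprime L n (q : nat) : prime q -> q \notin map val L -> coprime q (pp L n).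
Proof.
move=> qp; elim: L => [|R L IH]; rewrite /pp ?big_nil ?big_cons ?coprimen1 //.
rewrite map_cons in_cons negb_or => /andP[qR qL].
rewrite coprimeMr IH // andbT coprimeXr //.
by rewrite prime_coprime // dvdn_prime2 ?pprime.
Qed.

Lemma pp_abs L n (Q : primeT) : uniq L ->
  pa Q (pp L n)%:R = if Q \in L then (val Q)%:R^-1 ^+ n else 1.
Proof.
elim: L => [|R L IH]; rewrite /pp ?big_nil ?pabs1 //= => /andP[RL uL].
rewrite big_cons natrM pabsM // IH // natrX pabsX // in_cons.
have [->|QR] := eqVneq Q R; first by rewrite (negbTE RL) pabs_p // mulr1.
rewrite pabs_q ?pprime // ?expr1n ?mul1r //.
by apply: contraNneq QR => /val_inj ->.
Qed.

Lemma crt (L : seq primeT) n (r : primeT -> int) : uniq L ->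
  exists z : int, forall Q, Q \in L -> ((val Q ^ n)%N %| z - r Q)%Z.
Proof.
elim: L => [|P L IH] /=; first by exists 0.
case/andP=> PL /IH [z hz].
have cp : coprimez (val P ^ n)%N (pp L n).
  rewrite coprimezE !absz_nat coprimeXl // pp_coprime ?pprime //.
  by rewrite mem_map //; exact: val_inj.
exists (zchinese (val P ^ n)%N (pp L n) (r P) z) => Q; rewrite in_cons.
case/orP=> [/eqP->|QL].
  by rewrite -eqz_mod_dvd; apply/eqP; exact: zchinese_modl.
have h1 : ((pp L n)%:Z %| zchinese (val P ^ n)%N (pp L n) (r P) z - z)%Z.
  by rewrite -eqz_mod_dvd; apply/eqP; exact: zchinese_modr.
have h2 : ((val Q ^ n)%N %| (pp L n)%:Z)%Z by rewrite dvdzE !absz_nat pp_dvd.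
set zc := zchinese _ _ _ _ in h1 *.
have -> : zc - r Q = (zc - z) + (z - r Q) by rewrite addrA subrK.
by apply: rpredD; [exact: (dvdz_trans h2 h1) | exact: hz].
Qed.
End NT.

Set Implicit Arguments. Unset Strict Implicit. Unset Printing Implicit Defensive.

Lemma bound_list (T : eqType) (L : seq T) (f : T -> rat) :
  exists K : nat, forall Q, Q \in L -> f Q < K%:R.
Proof.
elim: L => [|P L [K IH]]; first by exists 0%N.
exists (maxn K (Num.Def.archi_bound `|f P|)) => Q; rewrite in_cons.
case/orP=> [/eqP->|QL].
  apply: (le_lt_trans (ler_norm _)); apply: (lt_le_trans (archi_boundP _)) => //.
  by rewrite ler_nat leq_maxr.
by apply: (lt_le_trans (IH _ QL)); rewrite ler_nat leq_maxl.
Qed.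

Section NT2.
Variable Qp : forall P : primeT, padic_field (val P).
Local Notation pa X := (padic_abs (val X)).

Lemma pabs_natD (Q : primeT) (D : nat) : ~~ (val Q %| D)%N -> pa Q D%:R = 1.
Proof. by move=> h; rewrite -[D%:R]/((D%:Z)%:~R) pabs_unit // absz_nat. Qed.

Lemma pow_big (Q : primeT) (K : nat) (x : rat) : x < K%:R -> x < (val Q)%:R ^+ K.
Proof.
move=> h; apply: (lt_trans h); rewrite -natrX ltr_nat ltn_expl //; exact: pgt1.
Qed.

Lemma NT (L : seq primeT) (t d : primeT -> rat) : uniq L ->
  (forall Q, Q \in L -> 0 < d Q) ->
  exists E M : nat, (0 < E)%N /\ (0 < M)%N /\
  forall D : nat, (0 < D)%N -> (forall Q, Q \in L -> ~~ (val Q %| D)%N) ->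
  exists z0 : int, forall k : int,
   (forall Q, Q \in L ->
      pa Q ((z0 + M%:Z * k)%:~R / (E * D)%:R - t Q) < d Q) /\
   (forall Q : primeT, Q \notin L ->
      pa Q ((z0 + M%:Z * k)%:~R / (E * D)%:R * D%:R) <= 1).
Proof.
move=> uL dpos.
have [K1 hK1] := bound_list L (fun Q => pa Q (t Q)).
have [K2 hK2] := bound_list L (fun Q => (d Q)^-1).
exists (pp L K1), (pp L (K1 + K2)); split; first exact: pp_gt0.
split; first exact: pp_gt0.
move=> D D0 hD.
set E := pp L K1; set M := pp L (K1 + K2).
have E0 : E%:R != 0 :> rat by rewrite pnatr_eq0 -lt0n pp_gt0.
have D0' : D%:R != 0 :> rat by rewrite pnatr_eq0 -lt0n D0.
have paE : forall Q, Q \in L -> pa Q E%:R = (val Q)%:R^-1 ^+ K1.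
  by move=> Q QL; rewrite pp_abs // QL.
have hs : forall Q, Q \in L -> pa Q ((E * D)%:R * t Q) <= 1.
  move=> Q QL; rewrite natrM !(pabsM Qp) paE // pabs_natD ?hD // mulr1.
  rewrite exprVn -[X in _ <= X](@mulVf _ ((val Q)%:R ^+ K1)); last first.
    by rewrite expf_neq0 // gt_eqF // pQgt0.
  rewrite ler_pM2l ?invr_gt0 ?exprn_gt0 ?pQgt0 //.
  exact/ltW/pow_big/hK1.
have [r hr] : exists r : primeT -> int, forall Q, Q \in L ->
    pa Q ((r Q)%:~R - (E * D)%:R * t Q) <= (val Q)%:R^-1 ^+ (K1 + K2).
  have : forall Q, exists rq : int, Q \in L ->
      pa Q (rq%:~R - (E * D)%:R * t Q) <= (val Q)%:R^-1 ^+ (K1 + K2).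
    move=> Q; case QL: (Q \in L); last by exists 0.
    have [rq h] := papprox Qp (K1 + K2) (hs Q QL); by exists rq.
  by case/choice => f hf; exists f.
have [z0 hz0] := crt (K1 + K2) r uL.
exists z0 => k; split => Q QL; last first.
  rewrite natrM invfM mulrA mulfVK //.
  rewrite (pabsM Qp) (pabsV Qp) pp_abs // (negbTE QL) invr1 mulr1.
  exact: pabs_int.
have h1 : pa Q ((z0 + M%:Z * k)%:~R - (r Q)%:~R) <= (val Q)%:R^-1 ^+ (K1 + K2).
  rewrite -intrB; apply: (pabs_dvd Qp).
  have -> : z0 + M%:Z * k - r Q = (z0 - r Q) + k * M%:Z by ring.
  apply: rpredD; first exact: hz0.
  by apply: dvdz_mull; rewrite dvdzE !absz_nat pp_dvd.
have h2 : pa Q ((z0 + M%:Z * k)%:~R - (E * D)%:R * t Q) <= (val Q)%:R^-1 ^+ (K1 + K2).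
  have -> : (z0 + M%:Z * k)%:~R - (E * D)%:R * t Q =
     ((z0 + M%:Z * k)%:~R - (r Q)%:~R) + ((r Q)%:~R - (E * D)%:R * t Q) :> rat.
    by rewrite addrA subrK.
  by apply: le_trans (pabsD Qp Q _ _) _; rewrite ge_max h1 hr.
have ED0 : (E * D)%:R != 0 :> rat by rewrite natrM mulf_neq0.
have -> : (z0 + M%:Z * k)%:~R / (E * D)%:R - t Q =
    ((z0 + M%:Z * k)%:~R - (E * D)%:R * t Q) / (E * D)%:R.
  by rewrite mulrBl [_ * t Q]mulrC mulfK.
rewrite (pabsM Qp) (pabsV Qp) natrM (pabsM Qp) paE // pabs_natD ?hD // mulr1.
have xp : 0 < (val Q)%:R :> rat by exact: pQgt0.
rewrite natrM in h2; apply: (le_lt_trans (ler_wpM2r _ h2)).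
  by rewrite invr_ge0 exprn_ge0 // invr_ge0 ltW.
rewrite exprD mulrAC divff ?mul1r; last by rewrite expf_neq0 // invr_eq0 gt_eqF.
rewrite exprVn -[X in _ < X]invrK ltf_pV2 ?posrE ?invr_gt0 ?exprn_gt0 //.
  exact/pow_big/hK2.
by apply: dpos.
Qed.
End NT2.

Set Implicit Arguments. Unset Strict Implicit. Unset Printing Implicit Defensive.

Lemma real_approx (R : realType) (z0 : int) (M n : nat) (y : R) :
  (0 < M)%N -> (0 < n)%N ->
  exists k : int, z0 + M%:Z * k != 0 /\
    `|ratr ((z0 + M%:Z * k)%:~R / n%:R) - y| <= M%:R / n%:R.
Proof.
move=> M0 n0.
have Mp : 0 < M%:R :> R by rewrite ltr0n.
have np : 0 < n%:R :> R by rewrite ltr0n.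
set w := (y * n%:R - z0%:~R) / M%:R.
have /andP[k1 k2] := floor_itv w.
set k0 := Num.Def.floor w in k1 k2.
have e1 : k0%:~R * M%:R <= y * n%:R - z0%:~R by move: k1; rewrite /w ler_pdivlMr.
have e2 : y * n%:R - z0%:~R < k0%:~R * M%:R + M%:R.
  by move: k2; rewrite /w ltr_pdivrMr // intrD mulrDl mul1r.
have key : forall k : int, `|(z0 + M%:Z * k)%:~R - y * n%:R| <= M%:R ->
    `|ratr ((z0 + M%:Z * k)%:~R / n%:R) - y| <= M%:R / n%:R :> R.
  move=> k hk; rewrite fmorph_div rmorph_int rmorph_nat.
  have -> : (z0 + M%:Z * k)%:~R / n%:R - y =
      ((z0 + M%:Z * k)%:~R - y * n%:R) / n%:R :> R.
    by rewrite mulrBl mulfK // gt_eqF.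
  by rewrite normrM normfV (gtr0_norm np) ler_pM2r // invr_gt0.
have [hz|hz] := eqVneq (z0 + M%:Z * k0) 0.
  exists (k0 + 1); split.
    by rewrite mulrDr addrA hz add0r mulr1; case: (M) M0.
  apply: key; rewrite mulrDr addrA hz add0r mulr1.
  have hz' : z0%:~R + M%:R * k0%:~R = 0 :> R.
    by rewrite -[M%:R]/((M%:Z)%:~R) -intrM -intrD hz.
  rewrite ler_norml; apply/andP; split; rewrite -[(M%:Z)%:~R]/(M%:R : R); lra.
exists k0; split => //; apply: key.
rewrite intrD intrM -[(M%:Z)%:~R]/(M%:R : R) ler_norml; apply/andP; split; lra.
Qed.

Set Implicit Arguments. Unset Strict Implicit. Unset Printing Implicit Defensive.

Section Field.
Variables (Qp : forall P : primeT, padic_field (val P)) (P : primeT).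
Local Notation K := (Qp P).
Local Notation ab := (pf_abs K).
Local Notation emb := (pf_emb K).

Lemma fabs1 : ab 1 = 1.
Proof. by rewrite -(rmorph1 emb) pf_abs_emb pabs1. Qed.
Lemma fabsN x : ab (- x) = ab x.
Proof.
rewrite -mulN1r pf_absM -(rmorphN1 emb) pf_abs_emb.
by rewrite -(pabsN P) pabs1 mul1r.
Qed.
Lemma fabsB x y : ab (x - y) = ab (y - x).
Proof. by rewrite -fabsN opprB. Qed.
Lemma fabs_gt0 x : x != 0 -> 0 < ab x.
Proof.
move=> x0; rewrite lt_def pf_abs_ge0 andbT; apply/eqP => /pf_abs_eq0 h.
by rewrite h eqxx in x0.
Qed.
Lemma fabs0 : ab 0 = 0.
Proof. by apply/pf_abs_eq0. Qed.
Lemma fabsV x : ab (x^-1) = (ab x)^-1.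
Proof.
have [->|x0] := eqVneq x 0; first by rewrite invr0 fabs0 invr0.
have h : ab x * ab x^-1 = 1 by rewrite -pf_absM divff // fabs1.
by apply: (mulfI (lt0r_neq0 (fabs_gt0 x0))); rewrite h divff // gt_eqF // fabs_gt0.
Qed.

Lemma fabs_discrete x : x != 0 -> ab x < 1 -> ab x <= (val P)%:R^-1.
Proof.
move=> x0 x1.
have [r hr] := pf_dense x (fabs_gt0 x0).
have e : ab (emb r) = ab x.
  apply/eqP; rewrite eq_le; apply/andP; split.
    have -> : emb r = x - (x - emb r) by rewrite opprB addrC subrK.
    by apply: le_trans (pf_absD _ _) _; rewrite ge_max lexx fabsN ltW.
  rewrite leNgt; apply/negP => lt.
  have ex : emb r + (x - emb r) = x by rewrite addrC subrK.
  have h := pf_absD (emb r) (x - emb r); rewrite ex in h.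
  have : Num.max (ab (emb r)) (ab (x - emb r)) < ab x by rewrite gt_max lt hr.
  by rewrite ltNge h.
rewrite -e pf_abs_emb in x1 *.
have pg := pgt1 P.
rewrite /padic_abs in x1 *; case: (r == 0) in x1 *.
  by rewrite invr_ge0 ler0n.
case: (padic_val (val P) r) x1 => n.
  case: n => [|n]; first by rewrite oppr0 expr0z ltxx.
  rewrite -exprnN => _.
  have pq : 0 < (val P)%:R :> rat by exact: pQgt0.
  rewrite -[(val P)%:~R]/((val P)%:R : rat) -exprVn exprS.
  rewrite -[X in _ <= X]mulr1 ler_pM2l ?invr_gt0 //.
  by rewrite exprn_ile1 // ?invr_ge0 ?ltW // invf_lt1 // ltr1n.
rewrite NegzE opprK => h; exfalso; move: h; apply/negP; rewrite -leNgt.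
by rewrite -[X in _ <= X]/(((val P)%:R : rat) ^+ n.+1) exprn_ege1 // ler1n ltnW.
Qed.
End Field.

Set Implicit Arguments. Unset Strict Implicit. Unset Printing Implicit Defensive.

Definition enumPr (N : nat) : seq primeT := pmap insub (iota 0 N).
Lemma mem_enumPr N P : (P \in enumPr N) = (val P < N)%N.
Proof. by rewrite mem_pmap_sub mem_iota. Qed.
Lemma uniq_enumPr N : uniq (enumPr N).
Proof. exact: pmap_sub_uniq (iota_uniq 0 N). Qed.

Section Main.
Variables (Qp : forall P : primeT, padic_field (val P)) (R : realType).

Lemma basic_open (S0 : seq primeT) (Uinf : set R) (Up : forall P, set (pf_car (Qp P))) :
  open Uinf -> (forall P, P \in S0 -> padic_open (Up P)) ->
  adele_open (fun c : adele_t Qp R => Uinf c.2 /\ forall P, P \in S0 -> Up P (c.1 P)).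
Proof.
move=> oinf oUp b [N hN] [Ub Hb].
exists (S0 ++ enumPr N), Uinf, (fun P => if P \in S0 then Up P else setT).
split => //; split.
  move=> P _; case: ifP => [PS|_]; first exact: oUp.
  by move=> x _; exists 1; split.
split.
  split => // P; rewrite mem_cat; case PS: (P \in S0) => /=; first exact: Hb.
  case PN: (P \in enumPr N) => //; apply: hN.
  by rewrite leqNgt -mem_enumPr PN.
move=> c _ [Uc Hc]; split => // P PS; have := Hc P; rewrite mem_cat PS /=.
exact.
Qed.

Lemma open_neq0 (P : primeT) : padic_open [set x : pf_car (Qp P) | x != 0].
Proof.
move=> x /= x0; exists (pf_abs (Qp P) x); split; first exact: fabs_gt0.
move=> y hy; apply/eqP => y0; move: hy; rewrite y0 sub0r fabsN ltxx.
done.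
Qed.

Lemma forward (a b : adele_t Qp R) :
  adele_closure (Qstar_orbit a) b ->
    (is_adele b /\
     (forall P : primeT, a.1 P = 0 -> b.1 P = 0) /\
     (a.2 = 0 -> b.2 = 0)).
Proof.
case=> adb hcl; split => //; split.
  move=> P aP; apply/eqP/negPn/negP => bP.
  have oU := @basic_open [:: P] setT (fun P' => [set x : pf_car (Qp P') | x != 0])
    openT (fun P1 _ => @open_neq0 P1).
  have Ub : setT b.2 /\ (forall P', P' \in [:: P] -> b.1 P' != 0).
    by split => // P'; rewrite inE => /eqP ->.
  have [c [_ [[q [q0 ->]] [_ Uc]]]] := hcl _ oU Ub.
  by move: (Uc P); rewrite inE eqxx /adele_qmul /= aP mulr0 eqxx => /(_ isT).
move=> a0; apply/eqP/negPn/negP => b0.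
have oU := @basic_open [::] [set x : R | x != 0] (fun P' => setT)
    (@open_neq R 0) (fun P1 (_ : P1 \in [::]) => ltac:(by [])).
have Ub : [set x : R | x != 0] b.2 /\ (forall P', P' \in [::] -> @setT (pf_car (Qp P')) (b.1 P')) by [].
have [c [_ [[q [q0 ->]] [Uc _]]]] := hcl _ oU Ub.
by move: Uc; rewrite /adele_qmul /= a0 mulr0 /= eqxx.
Qed.
End Main.

Set Implicit Arguments. Unset Strict Implicit. Unset Printing Implicit Defensive.

Section Back.
Variables (Qp : forall P : primeT, padic_field (val P)) (R : realType).
Local Notation ab P := (pf_abs (Qp P)).
Local Notation emb P := (pf_emb (Qp P)).

Lemma nat_bound (S : seq primeT) : exists NS : nat, forall P, P \in S -> (val P < NS)%N.
Proof.
have [K hK] := bound_list S (fun P => (val P)%:R : rat).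
by exists K => P /hK; rewrite ltr_nat.
Qed.

Lemma backward (a b : adele_t Qp R) :
  is_adele a -> ~ adele_invertible a ->
  is_adele b -> (forall P : primeT, a.1 P = 0 -> b.1 P = 0) -> (a.2 = 0 -> b.2 = 0) ->
  adele_closure (Qstar_orbit a) b.
Proof.
move=> [Na hNa] ninv adb h1 h2; split => // U oU Ub.
have [S [Uinf [Up [oinf [oUp [[binf bS] hU]]]]]] := oU b adb Ub.
have [eps eps0 heps] : exists2 eps : R, 0 < eps & forall y, `|b.2 - y| < eps -> Uinf y.
  have : nbhs b.2 Uinf by apply: open_nbhs_nbhs; split.
  by case/nbhs_ballP => e e0 he; exists e => // y hy; apply: he.
have [eP heP] : exists eP : primeT -> rat, forall P, P \in S -> 0 < eP P /\
    forall y, ab P (y - b.1 P) < eP P -> Up P y.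
  have : forall P, exists e : rat, P \in S -> 0 < e /\
      forall y, ab P (y - b.1 P) < e -> Up P y.
    move=> P; case PS: (P \in S); last by exists 1.
    have := bS P; rewrite PS => bP.
    have [e [e0 he]] := oUp P PS (b.1 P) bP; by exists e.
  by case/choice => f hf; exists f.
have [NS hNS] := nat_bound S.
set N0 := maxn Na NS.
set L := [seq P <- enumPr N0 | a.1 P != 0].
have uL : uniq L by rewrite filter_uniq // uniq_enumPr.
have memL : forall P, (P \in L) = (val P < N0)%N && (a.1 P != 0).
  by move=> P; rewrite mem_filter mem_enumPr andbC.
have [t ht] : exists t : primeT -> rat, forall P, P \in S -> a.1 P != 0 ->
    ab P (b.1 P / a.1 P - emb P (t P)) < eP P / ab P (a.1 P).
  have : forall P, exists tp : rat, P \in S -> a.1 P != 0 ->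
      ab P (b.1 P / a.1 P - emb P tp) < eP P / ab P (a.1 P).
    move=> P; case PS: (P \in S); last by exists 0.
    have [a0|a0] := eqVneq (a.1 P) 0; first by exists 0 => _ /negP; rewrite a0.
    have ep : 0 < eP P / ab P (a.1 P).
      by rewrite divr_gt0 ?(heP P PS).1 ?fabs_gt0.
    have [tp htp] := pf_dense (b.1 P / a.1 P) ep; by exists tp.
  by case/choice => f hf; exists f.
pose t' := fun P => if P \in S then t P else 0.
pose d := fun P => (if P \in S then eP P else 1) / ab P (a.1 P).
have dpos : forall Q, Q \in L -> 0 < d Q.
  move=> Q; rewrite memL => /andP[_ aQ]; rewrite /d divr_gt0 ?fabs_gt0 //.
  by case: ifP => // QS; exact: (heP Q QS).1.
have [E [M [E0 [M0 hNT]]]] := NT Qp t' uL dpos.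
suff [D [D0 [hDL [hfree hreal]]]] : exists D : nat, (0 < D)%N /\
    (forall Q, Q \in L -> ~~ (val Q %| D)%N) /\
    (forall P, (val P %| D)%N -> ab P (a.1 P) * (padic_abs (val P) D%:R)^-1 <= 1) /\
    (a.2 != 0 -> M%:R * `|a.2| / eps < (E * D)%:R :> R).
  have [z0 hz0] := hNT D D0 hDL.
  have ED0 : (0 < E * D)%N by rewrite muln_gt0 E0.
  have [k [zk hk]] := @real_approx R z0 M (E * D) (b.2 / a.2) M0 ED0.
  have [hq1 hq2] := hz0 k.
  set q := (z0 + M%:Z * k)%:~R / (E * D)%:R : rat in hk hq1 hq2.
  have EDr : (E * D)%:R != 0 :> rat by rewrite pnatr_eq0 -lt0n.
  have q0 : q != 0 by rewrite mulf_neq0 ?intr_eq0 ?invr_eq0.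
  have hbasic : adele_basic S Uinf Up (adele_qmul q a).
    split.
      rewrite /adele_qmul /=; have [a20|a20] := eqVneq a.2 0.
        by rewrite a20 mulr0 -(h2 a20).
      apply: heps.
      have -> : b.2 - ratr q * a.2 = a.2 * (b.2 / a.2 - ratr q).
        by rewrite mulrBr [a.2 * (_ / _)]mulrC divfK // mulrC.
      rewrite normrM distrC.
      have ha : 0 < `|a.2| by rewrite normr_gt0.
      apply: (le_lt_trans (ler_wpM2l (ltW ha) hk)).
      have hr := hreal a20.
      have EDp : 0 < (E * D)%:R :> R by rewrite ltr0n.
      rewrite mulrA [`|a.2| * _]mulrC ltr_pdivrMr //.
      by move: hr; rewrite ltr_pdivrMr // mulrC [eps * _]mulrC.
    move=> P; rewrite /adele_qmul /=; case PS: (P \in S).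
      have [a0|a0] := eqVneq (a.1 P) 0.
        by rewrite a0 mulr0 -(h1 P a0); have := bS P; rewrite PS.
      have PL : P \in L.
        by rewrite memL a0 andbT; exact: leq_trans (hNS P PS) (leq_maxr _ _).
      have := hq1 P PL; rewrite /t' /d PS => hqt.
      apply: (heP P PS).2.
      have -> : emb P q * a.1 P - b.1 P =
          (emb P q - emb P (t P)) * a.1 P + (emb P (t P) - b.1 P / a.1 P) * a.1 P.
        by rewrite -mulrDl addrA subrK mulrBl divfK.
      have ha : 0 < ab P (a.1 P) by rewrite fabs_gt0.
      apply: le_lt_trans (pf_absD _ _) _; rewrite gt_max !pf_absM.
      rewrite -ltr_pdivlMr // -rmorphB pf_abs_emb hqt /=.
      by rewrite -ltr_pdivlMr // fabsB; exact: ht.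
    have [a0|a0] := eqVneq (a.1 P) 0; first by rewrite a0 mulr0 fabs0 ler01.
    rewrite pf_absM pf_abs_emb.
    case PL: (P \in L).
      have := hq1 P PL; rewrite /t' /d PS subr0 mul1r => hq.
      by apply: ltW; rewrite -ltr_pdivlMr ?fabs_gt0 // mul1r.
    have haP : ab P (a.1 P) <= 1.
      apply: hNa; move: PL; rewrite memL a0 andbT => /negbT; rewrite -leqNgt.
      exact: leq_trans (leq_maxl _ _).
    have hqD := hq2 P (negbT PL).
    have Dr : D%:R != 0 :> rat by rewrite pnatr_eq0 -lt0n.
    have -> : padic_abs (val P) q =
        padic_abs (val P) (q * D%:R) * (padic_abs (val P) D%:R)^-1.
      by rewrite -(pabsV Qp) -(pabsM Qp) mulfK.
    case: (boolP (val P %| D)%N) => PD.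
      rewrite -mulrA; apply: le_trans (hfree P PD); rewrite [_^-1 * _]mulrC.
      rewrite -[X in _ <= X]mul1r ler_wpM2r //.
      by rewrite mulr_ge0 ?pf_abs_ge0 // invr_ge0 pabs_ge0.
    rewrite pabs_natD // invr1 mulr1; apply: mulr_ile1 => //.
      exact: pabs_ge0.
    exact: pf_abs_ge0.
  have adc : is_adele (adele_qmul q a).
    exists NS => P hP; have := hbasic.2 P.
    case: ifP => // PS; have := hNS P PS; rewrite ltnNge hP.
    done.
  exists (adele_qmul q a); split => //; split; first by exists q.
  exact: hU.
have [a20|a20] := eqVneq a.2 0.
  exists 1%N; split => //; split.
    by move=> Q _; rewrite dvdn1 (gtn_eqF (pgt1 Q)).
  split; last by rewrite a20.
  by move=> P; rewrite dvdn1 (gtn_eqF (pgt1 P)).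
set K' := Num.Def.archi_bound (M%:R * `|a.2| / eps).
have hK' : M%:R * `|a.2| / eps < K'%:R :> R.
  by apply: archi_boundP; apply: divr_ge0; [apply: mulr_ge0 | exact: ltW].
have hbig : forall D : nat, (K' <= D)%N -> (0 < D)%N ->
    M%:R * `|a.2| / eps < (E * D)%:R :> R.
  move=> D KD D0; apply: (lt_le_trans hK'); rewrite ler_nat.
  apply: leq_trans KD _; rewrite -[X in (X <= _)%N]mul1n leq_mul2r E0 orbT //.
have [[P0 aP0]|nz] := pselect (exists P0, a.1 P0 = 0).
  have dvdP0 : forall P, (val P %| val P0 ^ K')%N -> P = P0.
    move=> P; rewrite Euclid_dvdX ?pprime // dvdn_prime2 ?pprime //.
    by case/andP => /eqP /val_inj.
  exists (val P0 ^ K')%N; split; first by rewrite expn_gt0 prime_gt0 ?pprime.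
  split.
    move=> Q QL; apply/negP => /dvdP0 QP; move: QL; rewrite memL QP aP0 eqxx.
    by rewrite andbF.
  split.
    by move=> P /dvdP0 ->; rewrite aP0 fabs0 mul0r ler01.
  move=> _; apply: hbig; last by rewrite expn_gt0 prime_gt0 ?pprime.
  exact/ltnW/ltn_expl/pgt1.
have anz : forall P, a.1 P != 0 by move=> P; apply/eqP => h; apply: nz; exists P.
have [P1 [hP1 aP1]] : exists P1 : primeT, (maxn N0 K' <= val P1)%N /\ ab P1 (a.1 P1) < 1.
  apply: contrapT => hn; apply: ninv.
  exists (fun P => (a.1 P)^-1, a.2^-1); split; last first.
    by split => [P|] /=; rewrite divff ?anz.
  exists (maxn (maxn N0 K') Na) => P /=; rewrite geq_max => /andP[h3 h4].
  have h5 : ~~ (ab P (a.1 P) < 1).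
    by apply/negP => h6; apply: hn; exists P.
  have h6 : ab P (a.1 P) = 1.
    by apply/eqP; rewrite eq_le hNa // leNgt h5.
  by rewrite fabsV h6 invr1.
exists (val P1); split; first exact: prime_gt0 (pprime P1).
have eqP1 : forall P, (val P %| val P1)%N -> P = P1.
  by move=> P; rewrite dvdn_prime2 ?pprime // => /eqP /val_inj.
split.
  move=> Q QL; apply/negP => /eqP1 QP; move: QL; rewrite memL QP.
  by rewrite ltnNge (leq_trans (leq_maxl _ _) hP1).
split.
  move=> P /eqP1 ->; rewrite pabs_p invrK.
  have hd := fabs_discrete (anz P1) aP1.
  have pq : 0 < (val P1)%:R :> rat by exact: pQgt0.
  by rewrite -ler_pdivlMr // div1r.
move=> _; apply: hbig; first exact: leq_trans (leq_maxr _ _) hP1.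
exact: prime_gt0 (pprime P1).
Qed.
End Back.

Unset Implicit Arguments.

Theorem lemma3p2 (Qp : forall P : primeT, padic_field (val P)) (R : realType)
  (a : adele_t Qp R) :
  is_adele a -> ~ adele_invertible a ->
  forall b : adele_t Qp R,
    adele_closure (Qstar_orbit a) b <->
    (is_adele b /\
     (forall P : primeT, a.1 P = 0 -> b.1 P = 0) /\
     (a.2 = 0 -> b.2 = 0)).
Proof.
move=> adA ninv b; split; first exact: forward.
by case=> adb [h1 h2]; apply: backward.
Qed.
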